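(* For $n\ge0$ let $A_n=\sum_{r=0}^n n!/r!$. A prime $p$ satisfies $0!-1!+2!-3!+\cdots+(-1)^{p-1}(p-1)!\equiv 0\pmod p$ if and only if $p$ divides $A_{p-1}$. *)

(* Defs.v *)
From mathcomp Require Import all_boot all_order all_algebra.
Set Implicit Arguments. Unset Strict Implicit. Unset Printing Implicit Defensive.
Import GRing.Theory Num.Theory.

(* A_n = sum_{r=0}^n n!/r!  (each quotient is exact since r <= n) *)
Definition A (n : nat) : nat := \sum_(0 <= r < n.+1) n`! %/ r`!.

Definition altfact (m : nat) : int :=
  (\sum_(0 <= k < m) (-1) ^+ k * (k`!)%:Z)%R.

(* Main.v *)
Require Import Defs.
From mathcomp Require Import all_boot all_order all_algebra.
From mathcomp Require Import ring.
Import GRing.Theory.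

Lemma key (p : nat) (hp : prime p) :
  (((A p.-1)%:R : 'F_p) = ((altfact p)%:~R : 'F_p))%R.
Proof.
have p0 := prime_gt0 hp.
set n := p.-1.
have pn : p = n.+1 by rewrite /n prednK.
have step : forall k, k <= n -> (((n ^_ k)%:R : 'F_p) = (-1) ^+ k * (k`!)%:R)%R.
  elim=> [|k IH] hk; first by rewrite ffactn0 expr0 mul1r.
  rewrite ffactnSr natrM IH ?(ltnW hk) // factS natrM exprS.
  have -> : (((n - k)%:R : 'F_p) = - (k.+1)%:R)%R.
    apply/eqP; rewrite -subr_eq0 opprK -natrD addnS subnK ?(ltnW hk) //.
    by rewrite -pn pchar_Fp_0.
  ring.
rewrite /A /altfact rmorph_sum [RHS]rmorph_sum big_nat_rev /= -pn.
apply: eq_big_nat => k /andP [_ hk]; move: hk; rewrite pn ltnS => hk.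
rewrite add0n subSS -ffact_factd // step //.
by rewrite rmorphM rmorphXn rmorphN1.
Qed.

Theorem lemma5p2 (p : nat) (hp : prime p) :
  ((p%:Z %| altfact p)%Z <-> (p %| A p.-1)%N).
Proof.
rewrite (dvdz_pcharf (pchar_Fp hp)) (dvdn_pcharf (pchar_Fp hp)) key //; by split.
Qed.
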